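(* Let $F:[0,1]^n\to\mathbb{R}$ be differentiable and $\epsilon>0$ be such that for all $x,y\in[0,1]^n$ with $x-y\in\mathbb{R}^n_{+}\cup\mathbb{R}^n_{-}$, $F(y)\le F(x)+\nabla F(x)^\top(y-x)+\epsilon$. Then $F$ is $\epsilon$-up-concave.
   Context: $F:[0,1]^n\to\mathbb{R}$ is $\epsilon$-up-concave ($\epsilon\ge0$) if for every $u\in\mathbb{R}^n_{+}$, $x\in[0,1]^n$, the function $G_{x,u}(t)=F(tu+x)$ satisfies $G_{x,u}(\lambda t_1+(1-\lambda)t_2)\ge\lambda G_{x,u}(t_1)+(1-\lambda)G_{x,u}(t_2)-\epsilon$ for all $\lambda\in[0,1]$ and $t_1,t_2\in\mathbb{R}$ such that $t_1u+x$, $t_2u+x$, and $x+\lambda t_1u+(1-\lambda)t_2u$ lie in $[0,1]^n$. *)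

(* Defs.v *)
From HB Require Import structures.
From mathcomp Require Import all_boot all_order all_algebra.
From mathcomp Require Import all_classical all_reals all_analysis.
Set Implicit Arguments. Unset Strict Implicit. Unset Printing Implicit Defensive.
Import Order.TTheory GRing.Theory Num.Theory.
Import numFieldNormedType.Exports.
Local Open Scope ring_scope.

Definition in_cube (R : realType) (n : nat) (x : 'rV[R]_n) : Prop :=
  forall i : 'I_n, 0 <= x ord0 i <= 1.

Definition nonneg_vec (R : realType) (n : nat) (u : 'rV[R]_n) : Prop :=
  forall i : 'I_n, 0 <= u ord0 i.

Definition eps_up_concave (R : realType) (n : nat) (F : 'rV[R]_n -> R)
    (eps : R) : Prop :=
  forall (u x : 'rV[R]_n), nonneg_vec u -> in_cube x ->
  forall (lam t1 t2 : R), 0 <= lam <= 1 ->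
    in_cube (t1 *: u + x) -> in_cube (t2 *: u + x) ->
    in_cube (x + (lam * t1 + (1 - lam) * t2) *: u) ->
    F ((lam * t1 + (1 - lam) * t2) *: u + x) >=
      lam * F (t1 *: u + x) + (1 - lam) * F (t2 *: u + x) - eps.

(* Main.v *)
Require Import Defs.
From HB Require Import structures.
From mathcomp Require Import all_boot all_order all_algebra.
From mathcomp Require Import all_classical all_reals all_analysis.
From mathcomp Require Import ring lra.
Import Order.TTheory GRing.Theory Num.Theory.
Import numFieldNormedType.Exports.
Local Open Scope ring_scope.

Lemma dir_lemma (R : realType) (n : nat) (u x : 'rV[R]_n) (a b : R) :
  nonneg_vec u ->
  nonneg_vec ((b *: u + x) - (a *: u + x)) \/ nonneg_vec ((a *: u + x) - (b *: u + x)).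
Proof.
move=> hu.
have E : forall c d : R, (c *: u + x) - (d *: u + x) = (c - d) *: u.
  by move=> c d; rewrite scalerBl; rewrite opprD addrACA subrr addr0.
rewrite !E.
have [hab|hab] := leP a b.
  by left => i; rewrite mxE; apply: mulr_ge0 => //; rewrite subr_ge0.
right => i; rewrite mxE; apply: mulr_ge0 => //; rewrite subr_ge0; exact: ltW.
Qed.

Theorem mainTheorem6 (R : realType) (n : nat) (F : 'rV[R]_n -> R) (eps : R) :
  0 < eps ->
  (forall x : 'rV[R]_n, in_cube x -> differentiable F x) ->
  (forall x y : 'rV[R]_n, in_cube x -> in_cube y ->
     (nonneg_vec (x - y) \/ nonneg_vec (y - x)) ->
     F y <= F x + 'd F x (y - x) + eps) ->
  eps_up_concave F eps.
Proof.
move=> _ _ H u x hu hx lam t1 t2 /andP[l0 l1] c1 c2 cz.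
set s := lam * t1 + (1 - lam) * t2.
have cz' : in_cube (s *: u + x) by rewrite addrC.
have h1 := H _ _ cz' c1 (@dir_lemma _ _ u x t1 s hu).
have h2 := H _ _ cz' c2 (@dir_lemma _ _ u x t2 s hu).
have E : lam *: (t1 *: u + x - (s *: u + x)) + (1 - lam) *: (t2 *: u + x - (s *: u + x)) = 0.
  have D : forall c d : R, (c *: u + x) - (d *: u + x) = (c - d) *: u.
    by move=> c d; rewrite scalerBl; rewrite opprD addrACA subrr addr0.
  rewrite !D !scalerA -scalerDl.
  have -> : lam * (t1 - s) + (1 - lam) * (t2 - s) = 0 by rewrite /s; ring.
  by rewrite scale0r.
have L : lam * 'd F (s *: u + x) (t1 *: u + x - (s *: u + x)) +
   (1 - lam) * 'd F (s *: u + x) (t2 *: u + x - (s *: u + x)) = 0.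
  by rewrite -!linearZ /= -linearD /= E linear0.
have a1 := ler_wpM2l l0 h1.
have a2 : (1 - lam) * F (t2 *: u + x) <= (1 - lam) * (F (s *: u + x) + 'd F (s *: u + x) (t2 *: u + x - (s *: u + x)) + eps).
  by apply: ler_wpM2l => //; rewrite subr_ge0.
rewrite lerBlDr.
lra.
Qed.
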